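(* Assume (V1), (V2), and (In). Then for every $n\in\mathbb{N}$ and all $s,t\ge0$, $$d_{L,1}(\hat\rho^n(t),\hat\rho^n(s))\le 2L\max\{|v_{\max}|,|v(R)|,v_{\max}-v(R)\}\,|t-s|.$$
   Context: (V1): $v\in C^1([0,\infty))$ strictly decreasing; (V2): $v(0)=v_{\max}\in\mathbb{R}$. $\mathcal{M}_L$: nonnegative compactly supported Radon measures on $\mathbb{R}$ of mass $L>0$. (In): $\bar\rho\in\mathcal{M}_L\cap L^\infty(\mathbb{R})$; $R:=\|\bar\rho\|_{L^\infty}$; $\bar x_{\min}:=\min\mathrm{supp}\,\bar\rho$. For $n\in\mathbb{N}$: $N_n=2^n$, $\ell_n=2^{-n}L$, $\bar x^n_0=\bar x_{\min}$, $\bar x^n_i=\sup\{x:\int_{\bar x^n_{i-1}}^x\bar\rho<\ell_n\}$; $(x^n_i(t))$ solves $\dot x^n_{N_n}=v_{\max}$, $\dot x^n_i=v(\ell_n/(x^n_{i+1}-x^n_i))$, $x^n_i(0)=\bar x^n_i$; $y^n_i:=\ell_n/(x^n_{i+1}-x^n_i)$; $\hat\rho^n(t,x):=\sum_{i=0}^{N_n-1}y^n_i(t)\chi_{[x^n_i(t),x^n_{i+1}(t))}(x)$. For $\mu\in\mathcal{M}_L$, $F_\mu(x):=\mu((-\infty,x])$ and $d_{L,1}(\mu,\nu):=\|F_\mu-F_\nu\|_{L^1(\mathbb{R})}$, which equals the $L^1([0,L])$ distance of the pseudo-inverses $z\mapsto\inf\{x:F_\mu(x)>z\}$. *)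

(* Defs.v *)
From Stdlib Require Import Reals Lra.
Open Scope R_scope.

Fixpoint rsum (f : nat -> R) (k : nat) : R :=
  match k with O => 0 | S k' => rsum f k' + f k' end.

Definition C1_on_nonneg (v : R -> R) : Prop :=
  exists v' : R -> R,
    (forall x, 0 <= x -> forall eps, 0 < eps -> exists delta, 0 < delta /\
       forall h, h <> 0 -> 0 <= x + h -> Rabs h < delta ->
         Rabs ((v (x + h) - v x) / h - v' x) < eps) /\
    (forall x, 0 <= x -> forall eps, 0 < eps -> exists delta, 0 < delta /\
       forall y, 0 <= y -> Rabs (y - x) < delta -> Rabs (v' y - v' x) < eps).

Definition strictly_decreasing_nonneg (v : R -> R) : Prop :=
  forall a b, 0 <= a -> a < b -> v b < v a.

(* F is the cumulative distribution function F(x) = rho((-oo,x]) of a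
   nonnegative compactly supported measure of mass L with density in
   L^oo, and Rinf = ||rho||_{L^oo}.  Such F are exactly the nondecreasing
   Lipschitz functions vanishing near -oo and equal to L near +oo; the
   L^oo norm of the density equals the least Lipschitz constant of F. *)
Definition lipschitz_with (F : R -> R) (K : R) : Prop :=
  forall a b, a <= b -> F b - F a <= K * (b - a).

Definition initial_datum (F : R -> R) (L Rinf : R) : Prop :=
  0 < L /\
  (forall a b, a <= b -> F a <= F b) /\
  (exists a b, (forall z, z < a -> F z = 0) /\ (forall z, b <= z -> F z = L)) /\
  lipschitz_with F Rinf /\
  (forall K, lipschitz_with F K -> Rinf <= K).

Definition in_supp (F : R -> R) (z : R) : Prop :=
  forall eps, 0 < eps -> F (z - eps) < F (z + eps).

Definition is_min_supp (F : R -> R) (m : R) : Prop :=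
  in_supp F m /\ forall z, in_supp F z -> m <= z.

Definition N_n (n : nat) : nat := (2 ^ n)%nat.
Definition ell (L : R) (n : nat) : R := L / 2 ^ n.

Definition initial_positions (F : R -> R) (L : R) (n : nat) (xbar : nat -> R)
  : Prop :=
  is_min_supp F (xbar O) /\
  forall i, (i < N_n n)%nat ->
    is_lub (fun z => F z - F (xbar i) < ell L n) (xbar (S i)).

Definition y_n (L : R) (n : nat) (x : nat -> R -> R) (i : nat) (t : R) : R :=
  ell L n / (x (S i) t - x i t).

(* (x_0,...,x_{N_n}) solves the follow-the-leader system on [0,oo)
   with initial data xbar (continuous at t = 0 from the right,
   differentiable for t > 0, particles ordered so that the right-hand
   side is defined). *)
Definition FTL_solution (v : R -> R) (L : R) (n : nat) (xbar : nat -> R)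
  (x : nat -> R -> R) : Prop :=
  (forall i, (i <= N_n n)%nat -> x i 0 = xbar i) /\
  (forall i, (i <= N_n n)%nat -> forall eps, 0 < eps -> exists delta,
      0 < delta /\ forall t, 0 <= t -> t < delta -> Rabs (x i t - x i 0) < eps) /\
  (forall t, 0 < t -> derivable_pt_lim (x (N_n n)) t (v 0)) /\
  (forall i t, (i < N_n n)%nat -> 0 < t ->
      derivable_pt_lim (x i) t (v (y_n L n x i t))) /\
  (forall i t, (i < N_n n)%nat -> 0 <= t -> x i t < x (S i) t).

Definition rho_hat (L : R) (n : nat) (x : nat -> R -> R) (t z : R) : R :=
  rsum (fun i => y_n L n x i t *
          (if Rle_dec (x i t) z then if Rlt_dec z (x (S i) t) then 1 else 0
           else 0)) (N_n n).

(* its distribution function F_{hat rho^n(t)}(z) = int_{-oo}^z hat rho^n(t),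
   written out: int_{-oo}^z y chi_[a,b) = y * max(0, min(z,b) - a). *)
Definition F_rho_hat (L : R) (n : nat) (x : nat -> R -> R) (t z : R) : R :=
  rsum (fun i => y_n L n x i t * Rmax 0 (Rmin z (x (S i) t) - x i t)) (N_n n).

(* d_{L,1}(mu,nu) = || F_mu - F_nu ||_{L^1(R)} <= C, expressed with Riemann
   integrals over all compact intervals (the integrand is nonnegative). *)
Definition dL1_le (Fmu Fnu : R -> R) (C : R) : Prop :=
  forall a b, a <= b ->
    exists pr : Riemann_integrable (fun z => Rabs (Fmu z - Fnu z)) a b,
      RiemannInt pr <= C.

(* Main.v *)
Require Import Defs.
From Stdlib Require Import Lia Classical.
From Stdlib Require Import Reals Lra.
From Coquelicot Require Import Coquelicot.
Open Scope R_scope.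

Definition ramp (l a b z : R) := l / (b - a) * Rmax 0 (Rmin z b - a).

Lemma ramp_bounds l a b z : 0 < l -> a < b -> 0 <= ramp l a b z <= l.
Proof.
  intros Hl Hab. unfold ramp.
  assert (Hq : l / (b - a) * (b - a) = l) by (field; lra).
  assert (Hq0 : 0 < l / (b - a)) by (apply Rdiv_lt_0_compat; lra).
  set (q := l / (b - a)) in *.
  unfold Rmax, Rmin; repeat destruct Rle_dec; nra.
Qed.

Lemma ramp_mono l a b a' b' z : 0 < l -> a < b -> a' < b' -> a <= a' -> b <= b' ->
  ramp l a' b' z <= ramp l a b z.
Proof.
  intros Hl Hab Hab' H1 H2. unfold ramp.
  assert (Hq : l / (b - a) * (b - a) = l) by (field; lra).
  assert (Hq0 : 0 < l / (b - a)) by (apply Rdiv_lt_0_compat; lra).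
  assert (Hq' : l / (b' - a') * (b' - a') = l) by (field; lra).
  assert (Hq0' : 0 < l / (b' - a')) by (apply Rdiv_lt_0_compat; lra).
  set (q := l / (b - a)) in *. set (q' := l / (b' - a')) in *.
  unfold Rmax, Rmin; repeat destruct Rle_dec; try nra.
  (* remaining: q' (z - a') <= q (z - a) with a' <= z <= b *)
  apply Rmult_le_reg_r with ((b - a) * (b' - a')). nra.
  replace (q' * (z - a') * ((b - a) * (b' - a'))) with (l * (z - a') * (b - a)) by (rewrite <- Hq'; ring).
  replace (q * (z - a) * ((b - a) * (b' - a'))) with (l * (z - a) * (b' - a')) by (rewrite <- Hq; ring).
  rewrite !Rmult_assoc. apply Rmult_le_compat_l. lra.
  assert ((z - a') * (b - z) <= (z - a) * (b' - z)) by (apply Rmult_le_compat; lra).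
  nra.
Qed.

Lemma ramp_shift l a b D z : ramp l (a + D) (b + D) z = ramp l a b (z - D).
Proof.
  unfold ramp. replace (b + D - (a + D)) with (b - a) by ring. f_equal.
  unfold Rmax, Rmin; repeat destruct Rle_dec; lra.
Qed.

Lemma ramp_lip l a b z w : 0 < l -> a < b ->
  Rabs (ramp l a b z - ramp l a b w) <= l / (b - a) * Rabs (z - w).
Proof.
  intros Hl Hab. unfold ramp.
  assert (Hq0 : 0 < l / (b - a)) by (apply Rdiv_lt_0_compat; lra).
  set (q := l / (b - a)) in *.
  rewrite <- Rmult_minus_distr_l, Rabs_mult, (Rabs_right q) by lra.
  apply Rmult_le_compat_l. lra.
  unfold Rmax, Rmin; repeat destruct Rle_dec; unfold Rabs; repeat destruct Rcase_abs; lra.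
Qed.

Lemma rsum_le f g k : (forall i, (i < k)%nat -> f i <= g i) -> rsum f k <= rsum g k.
Proof.
  induction k; simpl; intros H. lra.
  apply Rplus_le_compat. apply IHk; intros; apply H; auto. apply H; auto.
Qed.

Lemma rsum_const c k : rsum (fun _ => c) k = INR k * c.
Proof. induction k. simpl; ring. rewrite S_INR. cbn [rsum]. rewrite IHk. ring. Qed.

Lemma rsum_scal f c k : rsum (fun i => f i * c) k = rsum f k * c.
Proof. induction k; simpl. ring. rewrite IHk. ring. Qed.

Lemma rsum_abs_diff f g k :
  Rabs (rsum f k - rsum g k) <= rsum (fun i => Rabs (f i - g i)) k.
Proof.
  induction k; simpl. rewrite Rminus_0_r, Rabs_R0. lra.
  replace (rsum f k + f k - (rsum g k + g k)) with ((rsum f k - rsum g k) + (f k - g k)) by ring.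
  eapply Rle_trans. apply Rabs_triang. lra.
Qed.

Lemma abs_le_b x D : Rabs x <= D -> -D <= x <= D.
Proof. unfold Rabs; destruct Rcase_abs; lra. Qed.

Definition Gp (l : R) (N : nat) (p : nat -> R) (z : R) :=
  rsum (fun i => ramp l (p i) (p (S i)) z) N.

Lemma Gp_bounds l N p z : 0 < l -> (forall i, (i < N)%nat -> p i < p (S i)) ->
  0 <= Gp l N p z <= INR N * l.
Proof.
  intros Hl Hp. unfold Gp. split.
  - replace 0 with (rsum (fun _ => 0) N) by (rewrite rsum_const; ring).
    apply rsum_le. intros; apply ramp_bounds; auto.
  - rewrite <- rsum_const. apply rsum_le. intros; apply ramp_bounds; auto.
Qed.

Lemma Gp_lip l N p z w : 0 < l -> (forall i, (i < N)%nat -> p i < p (S i)) ->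
  Rabs (Gp l N p z - Gp l N p w) <=
    rsum (fun i => l / (p (S i) - p i)) N * Rabs (z - w).
Proof.
  intros Hl Hp. unfold Gp. eapply Rle_trans. apply rsum_abs_diff.
  rewrite <- rsum_scal. apply rsum_le. intros; apply ramp_lip; auto.
Qed.

Lemma Gp_compare l N p q D z : 0 < l ->
  (forall i, (i < N)%nat -> p i < p (S i)) ->
  (forall i, (i < N)%nat -> q i < q (S i)) ->
  (forall i, (i <= N)%nat -> Rabs (q i - p i) <= D) ->
  Gp l N q z <= Gp l N p (z + D) /\ Gp l N p (z - D) <= Gp l N q z.
Proof.
  intros Hl Hp Hq HD. unfold Gp. split; apply rsum_le; intros i Hi.
  - assert (A := HD i ltac:(lia)). assert (B := HD (S i) ltac:(lia)).
    replace (z + D) with (z - - D) by ring. rewrite <- ramp_shift.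
    apply ramp_mono; auto.
    + specialize (Hp i Hi); lra.
    + apply abs_le_b in A; lra.
    + apply abs_le_b in B; lra.
  - assert (A := HD i ltac:(lia)). assert (B := HD (S i) ltac:(lia)).
    rewrite <- ramp_shift.
    apply ramp_mono; auto.
    + specialize (Hp i Hi); lra.
    + apply abs_le_b in A; lra.
    + apply abs_le_b in B; lra.
Qed.
Lemma lip_cont (f : R -> R) (x0 K : R) :
  (forall u, Rabs (f u - f x0) <= K * Rabs (u - x0)) -> continuity_pt f x0.
Proof.
  intros H. unfold continuity_pt, continue_in, limit1_in, limit_in.
  intros eps Heps. simpl. unfold R_dist.
  assert (HK : 0 <= Rabs K) by apply Rabs_pos.
  exists (eps / (Rabs K + 1)). split.
  { apply Rdiv_lt_0_compat; lra. }
  intros u [_ Hu].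
  assert (Ha : eps / (Rabs K + 1) * (Rabs K + 1) = eps) by (field; lra).
  pose proof (H u) as Hu'.
  pose proof (Rle_abs K).
  pose proof (Rabs_pos (u - x0)).
  nra.
Qed.

Lemma exr (f : R -> R) a b : (forall z, continuity_pt f z) -> ex_RInt f a b.
Proof.
  intros H. apply (ex_RInt_continuous (V:=R_CompleteNormedModule)). intros z _.
  apply continuity_pt_filterlim. apply H.
Qed.

Lemma cont_shift (G : R -> R) (D : R) : (forall z, continuity_pt G z) ->
  forall z, continuity_pt (fun u => G (u + D)) z.
Proof.
  intros H z. change (fun u => G (u + D)) with (comp G (fun u => u + D)).
  apply continuity_pt_comp.
  - apply (lip_cont _ _ 1). intros u. replace (u + D - (z + D)) with (u - z) by ring. lra.
  - apply H.
Qed.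

Lemma RInt_shift (G : R -> R) (D a b : R) : (forall z, continuity_pt G z) ->
  RInt (fun z => G (z + D)) a b = RInt G (a + D) (b + D).
Proof.
  intros H.
  assert (E := RInt_comp_lin (V:=R_CompleteNormedModule) G 1 D a b (exr _ _ _ H)).
  replace (1*a+D) with (a+D) in E by ring. replace (1*b+D) with (b+D) in E by ring.
  rewrite <- E. apply RInt_ext. intros.
  unfold scal; simpl; unfold mult; simpl. replace (1 * x + D) with (x + D) by ring; ring.
Qed.

Lemma int_bound (G H : R -> R) (Lm D a b : R) :
  (forall z, continuity_pt G z) -> (forall z, continuity_pt H z) ->
  (forall z, 0 <= G z <= Lm) -> 0 <= D -> a <= b ->
  (forall z, H z <= G (z + D) - G (z - D)) ->
  exists pr : Riemann_integrable H a b, RiemannInt pr <= 2 * D * Lm.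
Proof.
  intros HG HH Gb HD Hab Hle.
  exists (@continuity_implies_RiemannInt H a b Hab (fun z _ => HH z)).
  rewrite <- RInt_Reals.
  assert (HGp := cont_shift G D HG).
  assert (HGm := cont_shift G (-D) HG).
  apply Rle_trans with (RInt (fun z => G (z + D) - G (z + - D)) a b).
  { apply RInt_le; [exact Hab | apply exr; auto | | ].
    - apply exr. intros z. apply continuity_pt_minus; auto.
    - intros z _. replace (z + - D) with (z - D) by ring. auto. }
  rewrite (RInt_minus (fun z => G (z + D)) (fun z => G (z + - D))).
  2, 3: apply exr; auto.
  rewrite !RInt_shift; auto.
  assert (C1 := RInt_Chasles G (a + - D) (b + - D) (b + D)).
  assert (C2 := RInt_Chasles G (a + - D) (a + D) (b + D)).
  rewrite <- C2 in C1; try (apply exr; auto).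
  specialize (C1 (exr _ _ _ HG) (exr _ _ _ HG)).
  change (minus ?x ?y) with (x - y).
  change (plus ?x ?y) with (x + y) in C1.
  assert (U : RInt G (b + - D) (b + D) <= 2 * D * Lm).
  { apply Rle_trans with (Rabs (RInt G (b + - D) (b + D))). apply Rle_abs.
    eapply Rle_trans. apply abs_RInt_le_const with (M := Lm). lra. apply exr; auto.
    intros u _. specialize (Gb u). rewrite Rabs_right; lra. lra. }
  assert (V : 0 <= RInt G (a + - D) (a + D)).
  { apply RInt_ge_0. lra. apply exr; auto. intros u _. apply Gb. }
  lra.
Qed.

Lemma Gp_cont l N p : 0 < l -> (forall i, (i < N)%nat -> p i < p (S i)) ->
  forall z, continuity_pt (Gp l N p) z.
Proof.
  intros Hl Hp z. apply (lip_cont _ _ (rsum (fun i => l / (p (S i) - p i)) N)).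
  intros u. apply Gp_lip; auto.
Qed.

Lemma L1_bound l N p q D Lm a b : 0 < l ->
  (forall i, (i < N)%nat -> p i < p (S i)) ->
  (forall i, (i < N)%nat -> q i < q (S i)) -> 0 <= D ->
  (forall i, (i <= N)%nat -> Rabs (q i - p i) <= D) ->
  INR N * l = Lm -> a <= b ->
  exists pr : Riemann_integrable (fun z => Rabs (Gp l N p z - Gp l N q z)) a b,
    RiemannInt pr <= 2 * D * Lm.
Proof.
  intros Hl Hp Hq HD HPQ HLm Hab.
  apply (int_bound (Gp l N p)).
  - apply Gp_cont; auto.
  - intros z. apply (lip_cont _ _ (rsum (fun i => l / (p (S i) - p i)) N +
                                  rsum (fun i => l / (q (S i) - q i)) N)).
    intros u. eapply Rle_trans. apply Rabs_triang_inv2.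
    replace (Gp l N p u - Gp l N q u - (Gp l N p z - Gp l N q z)) with
      ((Gp l N p u - Gp l N p z) - (Gp l N q u - Gp l N q z)) by ring.
    eapply Rle_trans. apply Rabs_triang. rewrite Rabs_Ropp.
    rewrite Rmult_plus_distr_r. apply Rplus_le_compat; apply Gp_lip; auto.
  - intros z. rewrite <- HLm. apply Gp_bounds; auto.
  - auto.
  - auto.
  - intros z.
    destruct (Gp_compare l N p q D z Hl Hp Hq HPQ) as [A B].
    assert (HPP : forall i, (i <= N)%nat -> Rabs (p i - p i) <= D).
    { intros; rewrite Rminus_eq_0, Rabs_R0; auto. }
    destruct (Gp_compare l N p p D z Hl Hp Hp HPP) as [C E].
    unfold Rabs; destruct Rcase_abs; lra.
Qed.

Lemma cont_eps h u0 eps : continuity_pt h u0 -> 0 < eps ->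
  exists d, 0 < d /\ forall w, Rabs (w - u0) < d -> Rabs (h w - h u0) < eps.
Proof.
  intros Hc He. unfold continuity_pt, continue_in, limit1_in, limit_in in Hc.
  destruct (Hc eps He) as [d [Hd Hw]]. exists d; split; auto.
  intros w Hwd. destruct (Req_dec w u0) as [-> | Hne].
  - rewrite Rminus_eq_0, Rabs_R0; auto.
  - apply (Hw w). split. split. exact I. auto. simpl. unfold R_dist. auto.
Qed.

Lemma rmax0_cont c : continuity_pt (fun u => Rmax 0 u) c.
Proof.
  apply (lip_cont _ _ 1). intros u.
  unfold Rmax; repeat destruct Rle_dec; unfold Rabs; repeat destruct Rcase_abs; lra.
Qed.

Lemma ell_pos L n : 0 < L -> 0 < ell L n.
Proof. intros; unfold ell. apply Rdiv_lt_0_compat; auto. apply pow_lt; lra. Qed.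

Lemma mass L n : INR (N_n n) * ell L n = L.
Proof.
  unfold N_n, ell. rewrite pow_INR. simpl (INR 2). replace (1+1) with 2 by ring.
  field. apply pow_nonzero; lra.
Qed.

Lemma v_noninc v a b : strictly_decreasing_nonneg v -> 0 <= a -> a <= b -> v b <= v a.
Proof.
  intros H Ha Hab. destruct (Req_dec a b) as [-> | Hne]. lra.
  left; apply H; lra.
Qed.

Lemma y0_le F L Rinf n xbar v x :
  initial_datum F L Rinf -> initial_positions F L n xbar ->
  FTL_solution v L n xbar x ->
  forall i, (i < N_n n)%nat -> y_n L n x i 0 <= Rinf.
Proof.
  intros [HL [Hmon [_ [Hlip _]]]] [_ Hlub] [H0 [_ [_ [_ Hord]]]] i Hi.
  specialize (Hord i 0 Hi (Rle_refl 0)).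
  rewrite (H0 i ltac:(lia)), (H0 (S i) ltac:(lia)) in Hord.
  destruct (Hlub i Hi) as [Hub _].
  set (l := ell L n) in *.
  assert (Hl : 0 < l) by (apply ell_pos; auto).
  assert (Hge : l <= F (xbar (S i)) - F (xbar i)).
  { apply Rnot_lt_le; intro Hlt.
    set (g := l - (F (xbar (S i)) - F (xbar i))).
    assert (Hg : 0 < g) by (unfold g; lra).
    set (h := g / (Rabs Rinf + 1)).
    assert (Hh : 0 < h) by (unfold h; apply Rdiv_lt_0_compat; [lra | pose proof (Rabs_pos Rinf); lra]).
    assert (Hhg : h * (Rabs Rinf + 1) = g) by (unfold h; field; pose proof (Rabs_pos Rinf); lra).
    assert (Hin : F (xbar (S i) + h) - F (xbar i) < l).
    { pose proof (Hlip (xbar (S i)) (xbar (S i) + h) ltac:(lra)).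
      pose proof (Rle_abs Rinf). unfold g in Hhg. nra. }
    pose proof (Hub _ Hin). lra. }
  pose proof (Hlip (xbar i) (xbar (S i)) ltac:(lra)).
  unfold y_n. rewrite (H0 i ltac:(lia)), (H0 (S i) ltac:(lia)). fold l.
  apply Rmult_le_reg_r with (xbar (S i) - xbar i). lra.
  unfold Rdiv. rewrite Rmult_assoc, Rinv_l by lra. lra.
Qed.

Definition Ye L n (x : nat -> R -> R) i u :=
  ell L n / (x (S i) (Rmax 0 u) - x i (Rmax 0 u)).

Lemma Ye_eq L n x i u : 0 <= u -> Ye L n x i u = y_n L n x i u.
Proof. intros; unfold Ye, y_n; rewrite Rmax_right; auto. Qed.

Lemma x_cont v L n xbar x : FTL_solution v L n xbar x ->
  forall i, (i <= N_n n)%nat -> forall c, 0 <= c ->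
  continuity_pt (fun u => x i (Rmax 0 u)) c.
Proof.
  intros [H0 [Hr [HN [Hd Hord]]]] i Hi c Hc.
  destruct (Req_dec c 0) as [-> | Hne].
  - unfold continuity_pt, continue_in, limit1_in, limit_in. simpl. unfold R_dist.
    intros eps Heps. destruct (Hr i Hi eps Heps) as [d [Hdp Hdd]].
    exists d; split; auto. intros u [_ Hu].
    replace (Rmax 0 0) with 0 by (unfold Rmax; destruct Rle_dec; lra).
    unfold Rmax; destruct Rle_dec.
    + apply Hdd; auto. rewrite Rminus_0_r in Hu.
      pose proof (Rle_abs u). lra.
    + rewrite Rminus_eq_0, Rabs_R0; auto.
  - change (fun u => x i (Rmax 0 u)) with (comp (x i) (fun u => Rmax 0 u)).
    apply continuity_pt_comp. apply rmax0_cont.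
    rewrite Rmax_right by lra.
    assert (Hc2 : (i < N_n n)%nat \/ i = N_n n) by lia. destruct Hc2 as [Hlt|Heq];
      apply derivable_continuous_pt.
    + exists (v (y_n L n x i c)). apply Hd; auto; lra.
    + subst. exists (v 0). apply HN; lra.
Qed.

Lemma Ye_cont v L n xbar x : FTL_solution v L n xbar x ->
  forall i, (i < N_n n)%nat -> forall c, 0 <= c -> continuity_pt (Ye L n x i) c.
Proof.
  intros HF i Hi c Hc.
  change (Ye L n x i) with
    (div_fct (fct_cte (ell L n))
       (minus_fct (fun u => x (S i) (Rmax 0 u)) (fun u => x i (Rmax 0 u)))).
  apply continuity_pt_div.
  - apply continuity_pt_const. intros a b; reflexivity.
  - apply continuity_pt_minus; eapply x_cont; eauto; lia.
  - unfold minus_fct. rewrite Rmax_right by lra.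
    destruct HF as [_ [_ [_ [_ Hord]]]]. specialize (Hord i c Hi Hc). lra.
Qed.

Lemma nbhd_all (f : nat -> R -> R) (g : R -> R) N u0 :
  (forall i, (i < N)%nat -> continuity_pt (fun u => f i u - g u) u0) ->
  (forall i, (i < N)%nat -> f i u0 < g u0) ->
  exists d, 0 < d /\ forall w, Rabs (w - u0) < d -> forall i, (i < N)%nat -> f i w < g w.
Proof.
  induction N; intros Hc Hlt.
  - exists 1; split. lra. intros; lia.
  - destruct IHN as [d1 [Hd1 H1]].
    { intros; apply Hc; lia. }
    { intros; apply Hlt; lia. }
    assert (HN := Hlt N ltac:(lia)).
    destruct (cont_eps _ u0 (g u0 - f N u0) (Hc N ltac:(lia)) ltac:(lra)) as [d2 [Hd2 H2]].
    exists (Rmin d1 d2). split. apply Rmin_glb_lt; auto.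
    intros w Hw i Hi.
    assert (Hw1 : Rabs (w - u0) < d1) by (eapply Rlt_le_trans; [exact Hw | apply Rmin_l]).
    assert (Hw2 : Rabs (w - u0) < d2) by (eapply Rlt_le_trans; [exact Hw | apply Rmin_r]).
    assert (Hc2 : (i < N)%nat \/ i = N) by lia. destruct Hc2 as [Hl | ->].
    + apply H1; auto.
    + specialize (H2 w Hw2).
      pose proof (Rle_abs (f N w - g w - (f N u0 - g u0))). lra.
Qed.

Lemma maxp_eps v F L Rinf n xbar x eps T :
  strictly_decreasing_nonneg v ->
  initial_datum F L Rinf -> initial_positions F L n xbar ->
  FTL_solution v L n xbar x -> 0 < eps -> 0 <= T ->
  forall i, (i < N_n n)%nat -> Ye L n x i T < Rinf + eps * (1 + T).
Proof.
  intros Hv HIn Hip HF He HT.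
  set (N := N_n n).
  set (b := fun u => Rinf + eps * (1 + u)).
  set (P := fun u => forall i, (i < N)%nat -> Ye L n x i u < b u).
  change (P T).
  assert (HL : 0 < L) by (destruct HIn; auto).
  assert (Hl : 0 < ell L n) by (apply ell_pos; auto).
  assert (HP0 : P 0).
  { intros i Hi. rewrite Ye_eq by lra. pose proof (y0_le _ _ _ _ _ _ _ HIn Hip HF i Hi).
    unfold b. lra. }
  assert (Hbc : forall c, continuity_pt b c).
  { intros c. apply (lip_cont _ _ eps). intros u. unfold b.
    replace (Rinf + eps * (1 + u) - (Rinf + eps * (1 + c))) with (eps * (u - c)) by ring.
    rewrite Rabs_mult, (Rabs_right eps) by lra. lra. }
  assert (Hcont : forall i, (i < N)%nat -> forall c, 0 <= c ->
            continuity_pt (fun u => Ye L n x i u - b u) c).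
  { intros i Hi c Hc. apply continuity_pt_minus; auto. eapply Ye_cont; eauto. }
  assert (Hnb : forall u0, 0 <= u0 -> P u0 ->
            exists d, 0 < d /\ forall w, Rabs (w - u0) < d -> P w).
  { intros u0 Hu0 HP. destruct (nbhd_all (Ye L n x) b N u0) as [d [Hd Hw]].
    - intros; apply Hcont; auto.
    - exact HP.
    - exists d; split; auto. }
  apply NNPP; intro HnT.
  set (E := fun u => 0 <= u <= T /\ forall w, 0 <= w <= u -> P w).
  destruct (completeness E) as [s [Hub Hlub]].
  { exists T. intros u [Hu _]. lra. }
  { exists 0. split. lra. intros w Hw. replace w with 0 by lra. exact HP0. }
  assert (Hs0 : 0 <= s).
  { apply Hub. split. lra. intros w Hw. replace w with 0 by lra. exact HP0. }
  assert (HsT : s <= T).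
  { apply Hlub. intros u [Hu _]. lra. }
  assert (Hbelow : forall w, 0 <= w < s -> P w).
  { intros w Hw. apply NNPP; intro Hn.
    assert (s <= w).
    { apply Hlub. intros u [Hu1 Hu2]. destruct (Rle_or_lt u w); auto.
      exfalso; apply Hn; apply Hu2; lra. }
    lra. }
  assert (HnPs : ~ P s).
  { intro HPs. destruct (Hnb s Hs0 HPs) as [d [Hd Hw]].
    destruct (Req_dec s T) as [Heq | Hne].
    - rewrite Heq in HPs. contradiction.
    - set (w := Rmin (s + d / 2) T).
      assert (Hw1 : s < w /\ w <= T /\ w <= s + d / 2).
      { unfold w, Rmin; destruct Rle_dec; lra. }
      assert (Ew : E w).
      { split. lra. intros u Hu. destruct (Rlt_or_le u s).
        - apply Hbelow; lra.
        - apply Hw. rewrite Rabs_right; lra. }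
      pose proof (Hub w Ew). lra. }
  destruct (not_all_ex_not _ _ HnPs) as [i Hi].
  apply imply_to_and in Hi. destruct Hi as [Hi Hi2]. apply Rnot_lt_le in Hi2.
  assert (Hspos : 0 < s).
  { destruct (Req_dec s 0) as [Heq | Hne]. rewrite Heq in HnPs; contradiction. lra. }
  assert (Hle_all : forall j, (j < N)%nat -> Ye L n x j s <= b s).
  { intros j Hj. apply Rnot_lt_le; intro Hgt.
    destruct (cont_eps _ s (Ye L n x j s - b s) (Hcont j Hj s Hs0) ltac:(lra)) as [d [Hd Hw]].
    set (w := s - Rmin d s / 2).
    assert (Hw1 : 0 <= w < s /\ s - w < d).
    { unfold w, Rmin; destruct Rle_dec; lra. }
    specialize (Hw w ltac:(rewrite Rabs_left; lra)).
    pose proof (Hbelow w ltac:(lra) j Hj).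
    pose proof (Rle_abs (-(Ye L n x j w - b w - (Ye L n x j s - b s)))).
    rewrite Rabs_Ropp in H0. lra. }
  assert (Heqs : Ye L n x i s = b s) by (pose proof (Hle_all i Hi); lra).
  destruct HF as [H0 [Hr [HN [Hd Hord]]]].
  set (l := ell L n) in *.
  set (yi := y_n L n x i s).
  assert (Hyi : Ye L n x i s = yi) by (apply Ye_eq; lra).
  assert (Hdelta : 0 < x (S i) s - x i s) by (specialize (Hord i s Hi Hs0); lra).
  assert (Hypos : 0 < yi) by (unfold yi, y_n; apply Rdiv_lt_0_compat; auto).
  assert (HvS : exists vS, derivable_pt_lim (x (S i)) s vS /\ v yi <= vS).
  { assert (Hc2 : (S i < N)%nat \/ S i = N) by lia. destruct Hc2 as [Hlt | Heq].
    - exists (v (y_n L n x (S i) s)). split. apply Hd; auto.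
      apply v_noninc; auto.
      + unfold y_n; left; apply Rdiv_lt_0_compat; auto.
        specialize (Hord (S i) s Hlt Hs0); lra.
      + rewrite <- (Ye_eq L n x (S i) s) by lra. pose proof (Hle_all (S i) Hlt). lra.
    - exists (v 0). split. rewrite Heq. apply HN; auto.
      apply v_noninc; auto. lra. lra. }
  destruct HvS as [vS [HvS Hvle]].
  assert (Hder := derivable_pt_lim_div (fct_cte l) (x (S i) - x i)%F s 0 (vS - v yi)
             (derivable_pt_lim_const l s)
             (derivable_pt_lim_minus _ _ _ _ _ HvS (Hd i s Hi Hspos))
             ltac:(unfold minus_fct; lra)).
  set (Dv := (0 * (x (S i) - x i)%F s - (vS - v yi) * fct_cte l s) / ((x (S i) - x i)%F s)²) in Hder.
  assert (HDv : Dv <= 0).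
  { unfold Dv, minus_fct, fct_cte, Rsqr.
    set (q := / ((x (S i) s - x i s) * (x (S i) s - x i s))).
    assert (0 < q) by (unfold q; apply Rinv_0_lt_compat; nra).
    unfold Rdiv. fold q. assert (0 <= (vS - v yi) * l) by (apply Rmult_le_pos; lra). nra. }
  destruct (Hder (eps / 2) ltac:(lra)) as [dd Hdd].
  set (h := - Rmin dd s / 2).
  assert (Hh : h < 0 /\ Rabs h < dd /\ 0 <= s + h).
  { assert (Hm1 : Rmin dd s <= dd) by apply Rmin_l.
    assert (Hm2 : Rmin dd s <= s) by apply Rmin_r.
    assert (Hm3 : 0 < Rmin dd s) by (apply Rmin_glb_lt; [apply cond_pos | lra]).
    unfold h. rewrite Rabs_left by lra. lra. }
  specialize (Hdd h ltac:(lra) ltac:(lra)).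
  unfold div_fct, fct_cte, minus_fct in Hdd.
  pose proof (Hbelow (s + h) ltac:(lra) i Hi) as Hb.
  rewrite Ye_eq in Hb by lra.
  unfold y_n in Hb. fold l in Hb.
  unfold yi, y_n in Hyi. fold l in Hyi.
  rewrite Hyi in Heqs.
  unfold b in Heqs, Hb.
  set (r := l / (x (S i) (s + h) - x i (s + h)) - l / (x (S i) s - x i s)) in *.
  assert (Hrr : r < eps * h) by (unfold r; lra).
  set (qq := r / h) in *.
  assert (Hqq : qq * h = r) by (unfold qq; field; lra).
  assert (qq > eps) by nra.
  pose proof (Rle_abs (qq - Dv)). lra.
Qed.

Lemma maxp v F L Rinf n xbar x :
  strictly_decreasing_nonneg v ->
  initial_datum F L Rinf -> initial_positions F L n xbar ->
  FTL_solution v L n xbar x ->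
  forall T, 0 <= T -> forall i, (i < N_n n)%nat -> y_n L n x i T <= Rinf.
Proof.
  intros Hv HIn Hip HF T HT i Hi.
  apply Rnot_lt_le; intro Hgt.
  set (e := (y_n L n x i T - Rinf) / (2 * (1 + T))).
  assert (He : 0 < e) by (unfold e; apply Rdiv_lt_0_compat; lra).
  pose proof (maxp_eps v F L Rinf n xbar x e T Hv HIn Hip HF He HT i Hi) as H.
  rewrite Ye_eq in H by lra.
  assert (e * (1 + T) = (y_n L n x i T - Rinf) / 2) by (unfold e; field; lra).
  lra.
Qed.

Lemma rmax0_der c : 0 < c -> derivable_pt_lim (fun u => Rmax 0 u) c 1.
Proof.
  intros Hc eps He. exists (mkposreal c Hc). simpl. intros h Hh0 Hh.
  pose proof (Rle_abs (-h)). rewrite Rabs_Ropp in H.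
  rewrite (Rmax_right 0 (c + h)) by lra. rewrite (Rmax_right 0 c) by lra.
  replace ((c + h - c) / h - 1) with 0 by (field; auto). rewrite Rabs_R0; lra.
Qed.

Lemma mvt_bound (f df : R -> R) s t M : 0 <= s -> 0 <= t ->
  (forall c, 0 < c -> derivable_pt_lim f c (df c)) ->
  (forall c, 0 <= c -> continuity_pt (fun u => f (Rmax 0 u)) c) ->
  (forall c, 0 <= c -> Rabs (df c) <= M) ->
  Rabs (f t - f s) <= M * Rabs (t - s).
Proof.
  intros Hs Ht Hd Hc HM.
  destruct (MVT_gen (fun u => f (Rmax 0 u)) s t df) as [c [Hcr Heq]].
  - intros c Hcr. apply is_derive_Reals.
    assert (Hcp : 0 < c) by (pose proof (Rmin_glb s t 0 ltac:(lra) ltac:(lra)); lra).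
    replace (df c) with (df c * 1) by ring.
    change (fun u => f (Rmax 0 u)) with (comp f (fun u => Rmax 0 u)).
    apply derivable_pt_lim_comp. apply rmax0_der; auto.
    rewrite Rmax_right by lra. apply Hd; auto.
  - intros c Hcr. apply Hc.
    pose proof (Rmin_glb s t 0 ltac:(lra) ltac:(lra)); lra.
  - simpl in Heq. rewrite (Rmax_right 0 t), (Rmax_right 0 s) in Heq by lra.
    rewrite Heq, Rabs_mult. apply Rmult_le_compat_r. apply Rabs_pos.
    apply HM. pose proof (Rmin_glb s t 0 ltac:(lra) ltac:(lra)). lra.
Qed.

Lemma x_lip v vmax F L Rinf n xbar x :
  strictly_decreasing_nonneg v -> v 0 = vmax ->
  initial_datum F L Rinf -> initial_positions F L n xbar ->
  FTL_solution v L n xbar x ->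
  forall i, (i <= N_n n)%nat -> forall s t, 0 <= s -> 0 <= t ->
  Rabs (x i t - x i s) <= Rmax (Rabs vmax) (Rabs (v Rinf)) * Rabs (t - s).
Proof.
  intros Hv HV2 HIn Hip HF i Hi s t Hs Ht.
  assert (HL : 0 < L) by (destruct HIn; auto).
  assert (Hl : 0 < ell L n) by (apply ell_pos; auto).
  pose proof (x_cont _ _ _ _ _ HF i Hi) as Hcont.
  pose proof HF as HF0. destruct HF0 as [H0 [Hr [HN [Hd Hord]]]].
  assert (Hc2 : (i < N_n n)%nat \/ i = N_n n) by lia. destruct Hc2 as [Hlt | Heq].
  - apply (mvt_bound (x i) (fun c => v (y_n L n x i c))); auto.
    intros c Hc. 
    assert (Hy : 0 < y_n L n x i c).
    { unfold y_n; apply Rdiv_lt_0_compat; auto. specialize (Hord i c Hlt Hc); lra. }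
    assert (Hy2 : y_n L n x i c <= Rinf) by (eapply maxp; eauto).
    assert (A : v Rinf <= v (y_n L n x i c)) by (apply v_noninc; auto; lra).
    assert (B : v (y_n L n x i c) <= v 0) by (apply v_noninc; auto; lra).
    rewrite HV2 in B.
    pose proof (Rmax_l (Rabs vmax) (Rabs (v Rinf))).
    pose proof (Rmax_r (Rabs vmax) (Rabs (v Rinf))).
    pose proof (Rle_abs vmax). pose proof (Rle_abs (- v Rinf)) as HH2. rewrite Rabs_Ropp in HH2.
    unfold Rabs at 1; destruct Rcase_abs; lra.
  - subst i. apply (mvt_bound (x (N_n n)) (fun _ => v 0)); auto.
    intros c Hc. rewrite HV2. apply Rmax_l.
Qed.

Theorem proposition3p13 (v : R -> R) (vmax : R) (F : R -> R) (L Rinf : R)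
  (HV1 : C1_on_nonneg v) (HV1' : strictly_decreasing_nonneg v)
  (HV2 : v 0 = vmax)
  (HIn : initial_datum F L Rinf) :
  forall (n : nat) (xbar : nat -> R) (x : nat -> R -> R),
    initial_positions F L n xbar ->
    FTL_solution v L n xbar x ->
    forall s t : R, 0 <= s -> 0 <= t ->
      dL1_le (F_rho_hat L n x t) (F_rho_hat L n x s)
        (2 * L * Rmax (Rmax (Rabs vmax) (Rabs (v Rinf))) (vmax - v Rinf)
           * Rabs (t - s)).
Proof.
  intros n xbar x Hip HF s t Hs Ht a b Hab.
  assert (HL : 0 < L) by (destruct HIn; auto).
  assert (Hl : 0 < ell L n) by (apply ell_pos; auto).
  set (M' := Rmax (Rabs vmax) (Rabs (v Rinf))).
  assert (HM' : 0 <= M') by (unfold M'; eapply Rle_trans; [apply Rabs_pos | apply Rmax_l]).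
  change (F_rho_hat L n x t) with (Gp (ell L n) (N_n n) (fun i => x i t)).
  change (F_rho_hat L n x s) with (Gp (ell L n) (N_n n) (fun i => x i s)).
  destruct HF as [H0 [Hr [HN [Hd Hord]]]] eqn:HFe.
  destruct (L1_bound (ell L n) (N_n n) (fun i => x i t) (fun i => x i s)
              (M' * Rabs (t - s)) L a b Hl) as [pr Hpr].
  - intros i Hi. apply Hord; auto.
  - intros i Hi. apply Hord; auto.
  - apply Rmult_le_pos; auto. apply Rabs_pos.
  - intros i Hi. rewrite (Rabs_minus_sym t s).
    eapply x_lip; eauto.
  - apply mass.
  - exact Hab.
  - exists pr. eapply Rle_trans. exact Hpr.
    pose proof (Rmax_l M' (vmax - v Rinf)). fold M'.
    pose proof (Rabs_pos (t - s)).
    assert (0 <= L * Rabs (t - s)) by (apply Rmult_le_pos; lra). nra.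
Qed.
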